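(* Let $n\ge2$, $\kappa\ge1$, and identify $\mathcal G_{[n;\kappa]}$ with $\mathbb R^{n\kappa^n}$ (standard inner product). Then the subspaces $\mathcal S_{[n;\kappa]}$ and $\mathcal K_{[n;\kappa]}$ are orthogonal, and: (1) if $n>\kappa+1$, then $\mathcal G_{[n;\kappa]}=\mathcal S_{[n;\kappa]}\oplus\mathcal E_{[n;\kappa]}$; (2) if $n\le\kappa+1$, then $\mathcal G_{[n;\kappa]}=\mathcal S_{[n;\kappa]}\oplus\mathcal K_{[n;\kappa]}\oplus\mathcal E_{[n;\kappa]}$, where $\oplus$ denotes a direct sum of mutually orthogonal subspaces.
   Context: A finite game $G\in\mathcal G_{[n;\kappa]}$ has players $\{1,\dots,n\}$, each with strategy set $\{1,\dots,\kappa\}$ (strategy $j$ identified with $\delta_\kappa^j$, the $j$-th column of $I_\kappa$), and payoffs $c_i$; $V_i^c\in\mathbb R^{\kappa^n}$ is the row vector with $c_i(x_1,\dots,x_n)=V_i^c(x_1\otimes\cdots\otimes x_n)$, and the structure vector $V_G=[V_1^c,\dots,V_n^c]$ identifies $\mathcal G_{[n;\kappa]}$ with $\mathbb R^{n\kappa^n}$. $G$ is symmetric if for all $\sigma\in\mathbf S_n$, all $i$ and all profiles, $c_i(x_1,\dots,x_n)=c_{\sigma(i)}(x_{\sigma^{-1}(1)},\dots,x_{\sigma^{-1}(n)})$, and skew-symmetric if $c_i(x_1,\dots,x_n)=\mathrm{sgn}(\sigma)c_{\sigma(i)}(x_{\sigma^{-1}(1)},\dots,x_{\sigma^{-1}(n)})$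 for all such $\sigma,i$ and profiles. $\mathcal S_{[n;\kappa]}$, $\mathcal K_{[n;\kappa]}$ are the subspaces of symmetric and skew-symmetric games, and $\mathcal E_{[n;\kappa]}$ (asymmetric games) is the orthogonal complement of $\mathcal S_{[n;\kappa]}\cup\mathcal K_{[n;\kappa]}$ in $\mathbb R^{n\kappa^n}$. *)

(* Defs.v *)
From HB Require Import structures.
From mathcomp Require Import all_boot all_order all_algebra all_fingroup.
Set Implicit Arguments. Unset Strict Implicit. Unset Printing Implicit Defensive.
Import Order.TTheory GRing.Theory Num.Theory.
Local Open Scope ring_scope.

(* Players are 'I_n (player i+1 of the paper is index i), strategies are
   'I_k (strategy j+1 of the paper, i.e. delta_k^{j+1}, is index j).
   A game is the family of payoff functions c_i, i.e. an element of
   {ffun 'I_n -> {ffun profile -> R}}; its entries are exactly the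
   n * k^n coordinates of the structure vector V_G (up to a fixed
   reordering of coordinates), so the identification with R^{n k^n}
   and its standard inner product is the obvious one. *)
Definition profile (n k : nat) := {ffun 'I_n -> 'I_k}.
Definition game (R : ringType) (n k : nat) := {ffun 'I_n -> {ffun profile n k -> R}}.

Definition permute_profile (n k : nat) (s : 'S_n) (x : profile n k) : profile n k :=
  [ffun j => x ((s^-1)%g j)].

Definition gdot (R : ringType) (n k : nat) (c d : game R n k) : R :=
  \sum_(i < n) \sum_(x : profile n k) c i x * d i x.

Definition symmetric_game (R : ringType) (n k : nat) (c : game R n k) : Prop :=
  forall (s : 'S_n) (i : 'I_n) (x : profile n k),
    c i x = c (s i) (permute_profile s x).

Definition skew_symmetric_game (R : ringType) (n k : nat) (c : game R n k) : Prop :=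
  forall (s : 'S_n) (i : 'I_n) (x : profile n k),
    c i x = (-1) ^+ odd_perm s * c (s i) (permute_profile s x).

Definition asymmetric_game (R : ringType) (n k : nat) (c : game R n k) : Prop :=
  forall d : game R n k,
    symmetric_game d \/ skew_symmetric_game d -> gdot c d = 0.

(* Main.v *)
Require Import Defs.
From HB Require Import structures.
From mathcomp Require Import all_boot all_order all_algebra all_fingroup.
From mathcomp Require Import lra.
Import Order.TTheory GRing.Theory Num.Theory.
Local Open Scope ring_scope.

Section Aux.
Variables (R : realFieldType) (n k : nat).
Local Notation G := (game R n k).
Local Notation pp := (@permute_profile n k).

Lemma pp_mul (s t : 'S_n) (x : profile n k) : pp t (pp s x) = pp (s * t)%g x.
Proof. by apply/ffunP => j; rewrite !ffunE invMg permM. Qed.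

Lemma pp_inj (s : 'S_n) : injective (pp s).
Proof.
move=> x y H; apply/ffunP => m.
have := congr1 (fun f : profile n k => f (s m)) H.
by rewrite !ffunE permK.
Qed.

Lemma sum_perm_inv (F : 'I_n -> profile n k -> R) (s : 'S_n) :
  \sum_i \sum_x F (s i) (pp s x) = \sum_i \sum_x F i x.
Proof.
rewrite [RHS](reindex_inj (@perm_inj _ s)); apply eq_bigr => i _.
by rewrite [RHS](reindex_inj (@pp_inj s)).
Qed.

Lemma sum_perm_gdot (c d : G) (s : 'S_n) :
  \sum_i \sum_x c (s i) (pp s x) * d (s i) (pp s x) = gdot c d.
Proof. exact (sum_perm_inv (fun i x => c i x * d i x) s). Qed.

Definition PS (c : G) : G :=
  [ffun i => [ffun x => (n`!%:R)^-1 * \sum_(s : 'S_n) c (s i) (pp s x)]].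
Definition PK (c : G) : G :=
  [ffun i => [ffun x => (n`!%:R)^-1 *
     \sum_(s : 'S_n) (-1) ^+ odd_perm s * c (s i) (pp s x)]].

Lemma PS_sym c : symmetric_game (PS c).
Proof.
move=> t i x; rewrite !ffunE; congr (_ * _).
rewrite (reindex_inj (mulgI t)); apply eq_bigr => s _.
by rewrite pp_mul permM.
Qed.

Lemma sgn2 (b : bool) : (-1) ^+ b * (-1) ^+ b = 1 :> R.
Proof. by case: b; rewrite ?expr0 ?expr1 ?mulr1 ?mulrNN ?mulr1. Qed.

Lemma PK_skew c : skew_symmetric_game (PK c).
Proof.
move=> t i x; rewrite !ffunE mulrCA; congr (_ * _).
rewrite (reindex_inj (mulgI t)) mulr_sumr; apply eq_bigr => s _.
by rewrite pp_mul permM odd_permM signr_addb !mulrA.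
Qed.

Lemma gdotC (a b : G) : gdot a b = gdot b a.
Proof. by apply eq_bigr => i _; apply eq_bigr => x _; rewrite mulrC. Qed.

Lemma gdotDl (a b d : G) : gdot (a + b) d = gdot a d + gdot b d.
Proof.
rewrite /gdot -big_split; apply eq_bigr => i _.
rewrite -big_split; apply eq_bigr => x _; by rewrite !ffunE mulrDl.
Qed.

Lemma gdotNl (a d : G) : gdot (- a) d = - gdot a d.
Proof.
rewrite /gdot -sumrN; apply eq_bigr => i _.
rewrite -sumrN; apply eq_bigr => x _; by rewrite !ffunE mulNr.
Qed.

Lemma gdotBl (a b d : G) : gdot (a - b) d = gdot a d - gdot b d.
Proof. by rewrite gdotDl gdotNl. Qed.

Lemma gdot_eq0 (e : G) : gdot e e = 0 -> e = 0.
Proof.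
move=> H; apply/ffunP => i; apply/ffunP => x; rewrite !ffunE.
have P1 : forall j : 'I_n, true -> 0 <= \sum_y e j y * e j y.
  by move=> j _; apply: sumr_ge0 => y _; rewrite -expr2 sqr_ge0.
have H1 := psumr_eq0P P1 H.
have : \sum_x e i x * e i x = 0 by apply: H1.
have P2 : forall y : profile n k, true -> 0 <= e i y * e i y.
  by move=> y _; rewrite -expr2 sqr_ge0.
move/(psumr_eq0P P2) => H2.
have /eqP : e i x * e i x = 0 by exact: H2.
by rewrite mulf_eq0 orbb => /eqP.
Qed.

Lemma orth (s t : G) : (2 <= n)%N ->
  symmetric_game s -> skew_symmetric_game t -> gdot s t = 0.
Proof.
move=> n2 Hs Ht.
have h0 : (0 < n)%N by apply: leq_trans n2.
pose a : 'I_n := Ordinal h0. pose b : 'I_n := Ordinal n2.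
pose tau := tperm a b.
have odd1 : odd_perm tau = true by rewrite /tau odd_tperm.
have E : gdot s t = - gdot s t.
  rewrite /gdot [LHS](_ : _ = \sum_i \sum_x s (tau i) (permute_profile tau x) *
     t (tau i) (permute_profile tau x)); last first.
    by rewrite (sum_perm_inv (fun i x => s i x * t i x)).
  rewrite -sumrN; apply eq_bigr => i _.
  rewrite -sumrN; apply eq_bigr => x _.
  rewrite -(Hs tau) (Ht tau i x) odd1 expr1 mulN1r mulrN opprK.
  done.
lra.
Qed.

Lemma nfact_neq0 : (n`!%:R : R) != 0.
Proof. by rewrite pnatr_eq0 -lt0n fact_gt0. Qed.

Lemma gdot_PS c d : symmetric_game d -> gdot (PS c) d = gdot c d.
Proof.
move=> Hd.
transitivity (\sum_i \sum_x (n`!%:R)^-1 *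
    \sum_(s : 'S_n) (c (s i) (pp s x) * d (s i) (pp s x))).
  apply eq_bigr => i _; apply eq_bigr => x _.
  rewrite !ffunE -mulrA mulr_suml; congr (_ * _); apply eq_bigr => s _.
  by rewrite -Hd.
under eq_bigr do rewrite -big_distrr /=.
rewrite -big_distrr /=.
under eq_bigr do rewrite exchange_big /=.
rewrite exchange_big /=.
rewrite (eq_bigr (fun _ => gdot c d)); last first.
  by move=> s _; exact: sum_perm_gdot.
rewrite sumr_const card_Sn -[gdot c d *+ _]mulr_natl mulrA mulVf ?mul1r //.
exact: nfact_neq0.
Qed.

Lemma gdot_PK c d : skew_symmetric_game d -> gdot (PK c) d = gdot c d.
Proof.
move=> Hd.
transitivity (\sum_i \sum_x (n`!%:R)^-1 *
    \sum_(s : 'S_n) (c (s i) (pp s x) * d (s i) (pp s x))).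
  apply eq_bigr => i _; apply eq_bigr => x _.
  rewrite !ffunE -mulrA mulr_suml; congr (_ * _); apply eq_bigr => s _.
  by rewrite (Hd s) mulrACA sgn2 mul1r.
under eq_bigr do rewrite -big_distrr /=.
rewrite -big_distrr /=.
under eq_bigr do rewrite exchange_big /=.
rewrite exchange_big /=.
rewrite (eq_bigr (fun _ => gdot c d)); last first.
  by move=> s _; exact: sum_perm_gdot.
rewrite sumr_const card_Sn -[gdot c d *+ _]mulr_natl mulrA mulVf ?mul1r //.
exact: nfact_neq0.
Qed.

Lemma sym_sub (a b : G) : symmetric_game a -> symmetric_game b -> symmetric_game (a - b).
Proof. by move=> Ha Hb s i x; rewrite !ffunE (Ha s) (Hb s). Qed.


Lemma skew_sub (a b : G) :
  skew_symmetric_game a -> skew_symmetric_game b -> skew_symmetric_game (a - b).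
Proof. by move=> Ha Hb s i x; rewrite !ffunE (Ha s) (Hb s) mulrBr. Qed.

Lemma asym_sub (a b : G) :
  asymmetric_game a -> asymmetric_game b -> asymmetric_game (a - b).
Proof. by move=> Ha Hb d Hd; rewrite gdotBl Ha // Hb // subr0. Qed.

Lemma skew0 : skew_symmetric_game (0 : G).
Proof. by move=> s i x; rewrite !ffunE mulr0. Qed.

Lemma zero3 (A B E : G) : (2 <= n)%N ->
  symmetric_game A -> skew_symmetric_game B -> asymmetric_game E ->
  A + B + E = 0 -> [/\ A = 0, B = 0 & E = 0].
Proof.
move=> n2 HA HB HE H.
have HE' : E = - (A + B).
  by apply/eqP; rewrite -addr_eq0 addrC H.
have E0 : E = 0.
  have hA : gdot A E = 0 by rewrite gdotC; apply: HE; left.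
  have hB : gdot B E = 0 by rewrite gdotC; apply: HE; right.
  by apply: gdot_eq0; rewrite {1}HE' gdotNl gdotDl hA hB addr0 oppr0.
move: H; rewrite E0 addr0 => H.
have A0 : A = 0.
  apply: gdot_eq0.
  have hB : gdot B A = 0 by rewrite gdotC orth.
  have : gdot (A + B) A = 0.
    by rewrite H /gdot big1 // => i _; rewrite big1 // => x _; rewrite !ffunE mul0r.
  by rewrite gdotDl hB addr0.
by split => //; move: H; rewrite A0 add0r.
Qed.

Lemma easym c : (2 <= n)%N -> asymmetric_game (c - PS c - PK c).
Proof.
move=> n2 d [Hd|Hd]; rewrite !gdotBl.
  have h : gdot (PK c) d = 0 by rewrite gdotC; apply: orth => //; exact: PK_skew.
  by rewrite gdot_PS // h subrr subr0.
have h : gdot (PS c) d = 0 by apply: orth => //; exact: PS_sym.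
by rewrite gdot_PK // h subr0 subrr.
Qed.

Lemma decomp3 : (2 <= n)%N -> forall c : G,
       exists! p : G * G * G,
         [/\ symmetric_game p.1.1, skew_symmetric_game p.1.2,
             asymmetric_game p.2 & c = p.1.1 + p.1.2 + p.2].
Proof.
move=> n2 c.
exists (PS c, PK c, c - PS c - PK c); split.
  split => //=; [exact: PS_sym|exact: PK_skew|exact: easym|].
  by apply/ffunP => i; apply/ffunP => x; rewrite !ffunE; lra.
move=> [[a b] e] /= [Ha Hb He Hc].
have := @zero3 (PS c - a) (PK c - b) (c - PS c - PK c - e) n2.
case.
- by apply: sym_sub => //; exact: PS_sym.
- by apply: skew_sub => //; exact: PK_skew.
- by apply: asym_sub => //; exact: easym.
- apply/ffunP => i; apply/ffunP => x.
  move/(congr1 (fun g : G => g i x)): Hc; rewrite !ffunE => Hc; lra.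
by move=> /subr0_eq -> /subr0_eq -> /subr0_eq ->.
Qed.

Lemma skew_zero (t : G) : (k.+1 < n)%N -> skew_symmetric_game t -> t = 0.
Proof.
move=> hn Ht; apply/ffunP => i; apply/ffunP => x; rewrite !ffunE.
have [j [l [ji li jl xjl]]] : exists j l, [/\ j != i, l != i, j != l & x j = x l].
  case: (boolP [exists j, exists l, [&& j != i, l != i, j != l & x j == x l]]).
    move/existsP => [j /existsP [l /and4P [? ? ? /eqP ?]]]; by exists j, l.
  move=> Hn; exfalso.
  have inj : {in [set~ i] &, injective x}.
    move=> j l; rewrite !in_setC1 => ji li xjl; apply/eqP; apply/negPn/negP => jl.
    move/negP: Hn; apply; apply/existsP; exists j; apply/existsP; exists l.
    by rewrite ji li jl xjl eqxx.
  have := max_card (mem [set x y | y in [set~ i]]).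
  rewrite (card_in_imset inj) cardsC1 !card_ord /=.
  by move: hn; case: n => // m; rewrite ltnS /= => /ltn_geF ->.
pose tau := tperm j l.
have H := Ht tau i x.
have ti : tau i = i by rewrite /tau tpermD // eq_sym.
have px : permute_profile tau x = x.
  apply/ffunP => m; rewrite ffunE tpermV /tau.
  by case: tpermP => // ->.
move: H; rewrite ti px odd_tperm jl expr1 => H; lra.
Qed.
End Aux.

Theorem proposition5p8 (R : realFieldType) (n k : nat) :
  (2 <= n)%N -> (1 <= k)%N ->
  (forall s t : game R n k,
      symmetric_game s -> skew_symmetric_game t -> gdot s t = 0) /\
  ((k.+1 < n)%N ->
     forall c : game R n k,
       exists! p : game R n k * game R n k,
         [/\ symmetric_game p.1, asymmetric_game p.2 & c = p.1 + p.2]) /\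
  ((n <= k.+1)%N ->
     forall c : game R n k,
       exists! p : game R n k * game R n k * game R n k,
         [/\ symmetric_game p.1.1, skew_symmetric_game p.1.2,
             asymmetric_game p.2 & c = p.1.1 + p.1.2 + p.2]).
Proof.
move=> n2 k1; split; first by move=> s t; exact: orth.
split; last by move=> _; exact: decomp3.
move=> hn c.
have [[[a b] e] [[/= Ha Hb He Hc] Hu]] := @decomp3 R n k n2 c.
have b0 := @skew_zero R n k b hn Hb.
exists (a, e); split.
  by split => //=; rewrite Hc b0 addr0.
move=> [a' e'] /= [Ha' He' Hc'].
have H' : (a, b, e) = ((a', 0), e').
  by apply: Hu; split => //=; [exact: (@skew0 R n k)| rewrite addr0].
by case: H' => -> _ ->.
Qed.
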